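(* Let $d,\lambda_0,N_0\in\mathbb N$ and $\epsilon\in\left(0,\frac{1}{\lambda_0+1}\right)$ be given. There exists $c=c(\epsilon)>0$ such that the following holds for every positive integer $k\geq c\log d$: there is a scaling factor $\lambda_1=\lambda_1(\lambda_0,\epsilon,k,N_0)\in\mathbb N$ such that for every integer $\lambda\geq\lambda_1$ and for every point set $\mathcal{D}\subset\frac{\lambda}{\lambda_0}\mathbb Z^d\cap B_{\lambda N_0}$ with $|\mathcal{D}|=d$, there is a mapping $F:\mathcal{D}\to\frac{1}{\lambda_0}\mathbb Z^k$ such that for all $x,y\in\mathcal{D}$, \[ \left(1-\epsilon-\frac{\epsilon}{\lambda\lambda_0}\right)\|x-y\|\leq\|F(x)-F(y)\|\leq\left(1+\epsilon+\frac{\epsilon}{\lambda\lambda_0}\right)\|x-y\|. \]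
   Context: $\|\cdot\|$ denotes the Euclidean norm. $B_r$ denotes the closed Euclidean ball of radius $r$ centered at the origin in $\mathbb R^d$. For $s>0$ and $m\in\mathbb N$, $s\mathbb Z^m=\{s z: z\in\mathbb Z^m\}$. *)

(* Defs.v *)
From HB Require Import structures.
From mathcomp Require Import all_boot all_order all_algebra.
From mathcomp Require Export all_classical all_reals exp.
Set Implicit Arguments. Unset Strict Implicit. Unset Printing Implicit Defensive.
Import Order.TTheory GRing.Theory Num.Theory.
Local Open Scope ring_scope.

Definition enorm (R : realType) (n : nat) (v : 'rV[R]_n) : R :=
  Num.sqrt (\sum_(i < n) (v ord0 i) ^+ 2).

Definition in_scaled_lattice (R : realType) (n : nat) (s : R) (v : 'rV[R]_n) : Prop :=
  forall i : 'I_n, exists z : int, v ord0 i = s * z%:~R.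

Definition in_ball (R : realType) (n : nat) (r : R) (v : 'rV[R]_n) : Prop :=
  enorm v <= r.

(* Main.v *)
Require Import Defs.
From HB Require Import structures.
From mathcomp Require Import all_boot all_order all_algebra.
From mathcomp Require Import all_classical all_reals exp.
From mathcomp Require Import sequences.
From mathcomp Require Import ring lra zify.
Import Order.TTheory GRing.Theory Num.Theory.
Local Open Scope ring_scope.
Set Implicit Arguments. Unset Strict Implicit. Unset Printing Implicit Defensive.

Section S.
Variable R : realType.
Implicit Types x y t s : R.

Lemma expR_sq_ge x : 0 <= x -> x ^+ 2 / 4 <= expR x.
Proof.
move=> x0.
have h := expR_ge1Dx (x / 2).
have -> : expR x = expR (x/2) ^+ 2 by rewrite expr2 -expRD; congr expR; field.
have h0 : 0 <= 1 + x / 2 by lra.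
apply: (le_trans _ (lerXn2r 2 _ _ h)); rewrite ?nnegrE //; last exact: expR_ge0.
nra.
Qed.

Lemma expRN_le x : 0 <= x -> expR (- x) <= 1 - x + x ^+ 2.
Proof.
move=> x0.
have h := expR_sq_ge x0. have h1 := expR_ge1Dx x.
rewrite expRN.
have hp : 0 < expR x := expR_gt0 x.
rewrite -div1r ler_pdivrMr //.
have : 1 <= (1 - x + x^+2) * (1 + x + x^+2/4) by nra.
nra.
Qed.

Lemma expR_le_inv x : x < 1 -> expR x <= (1 - x)^-1.
Proof.
move=> x1. have h := expR_ge1Dx (- x).
rewrite expRN in h.
have hp : 0 < expR x := expR_gt0 x.
rewrite -(invrK (expR x)) lef_pV2 ?posrE ?invr_gt0 //; lra.
Qed.

Lemma cosh_le y : expR y + expR (- y) <= 2 * expR (2 * y ^+ 2).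
Proof.
case: (lerP (1/2) `|y|) => hy.
  have hn : `|y|^+2 = y^+2 := real_normK (num_real y).
  have n1 := ler_norm y. have n2 := ler_norm (-y). rewrite normrN in n2.
  have hq : `|y| <= 2 * y ^+ 2 by rewrite -hn; nra.
  have h1 : expR y <= expR (2 * y ^+ 2) by rewrite ler_expR; lra.
  have h2 : expR (-y) <= expR (2 * y ^+ 2) by rewrite ler_expR; lra.
  lra.
have hy' : -(1/2) < y < 1/2 by rewrite -ltr_norml.
case/andP: hy' => hya hyb.
have e1 : expR y <= ((1 - y/2) ^+ 2)^-1.
  have := @expR_le_inv (y/2) ltac:(lra).
  move=> h. have -> : expR y = expR (y/2) ^+ 2 by rewrite expr2 -expRD; congr expR; field.
  rewrite -exprVn. apply: lerXn2r => //; rewrite ?nnegrE ?expR_ge0 // invr_ge0; lra.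
have e2 : expR (-y) <= ((1 + y/2) ^+ 2)^-1.
  have := @expR_le_inv (- y/2) ltac:(lra).
  move=> h. have -> : expR (-y) = expR (-y/2) ^+ 2 by rewrite expr2 -expRD; congr expR; field.
  rewrite -exprVn. have -> : 1 + y / 2 = 1 - (- y/2) by ring. 
  apply: lerXn2r => //; rewrite ?nnegrE ?expR_ge0 // invr_ge0; lra.
have e3 := expR_ge1Dx (2 * y ^+ 2).
set t := y / 2 in e1 e2 *.
have ht : -1/4 < t < 1/4 by apply/andP; split; rewrite /t; lra.
case/andP: ht => hta htb.
have hA : 0 < 1 - t by lra. have hB : 0 < 1 + t by lra.
have key : ((1 - t) ^+ 2)^-1 + ((1 + t) ^+ 2)^-1 <= 2 * (1 + 2 * y ^+ 2).
  have -> : y = 2 * t by rewrite /t; field.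
  have hP : 0 < (1 - t)^+2 * (1+t)^+2 by apply: mulr_gt0; apply: exprn_gt0.
  have -> : ((1 - t) ^+ 2)^-1 + ((1 + t) ^+ 2)^-1 = ((1+t)^+2 + (1-t)^+2) / ((1 - t)^+2 * (1+t)^+2).
    field. by rewrite !lt0r_neq0.
  rewrite ler_pdivrMr //.
  have ht2 : t^+2 <= 1/16 by nra.
  nra.
lra.
Qed.
End S.


Fixpoint signs (n : nat) : seq (seq bool) :=
  if n is n'.+1 then map (cons true) (signs n') ++ map (cons false) (signs n')
  else [:: [::]].

Section S2.
Variable R : realType.

Fixpoint dotl (t : seq bool) (us : seq R) : R :=
  match t, us with
  | b :: t', u :: us' => (if b then u else - u) + dotl t' us'
  | _, _ => 0
  end.

Definition rs (f : R -> R) (us : seq R) (c : R) : R :=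
  \sum_(t <- signs (size us)) f (c + dotl t us).

Definition sumsq (us : seq R) : R := \sum_(u <- us) u ^+ 2.

Lemma rs_nil f c : rs f [::] c = f c.
Proof. by rewrite /rs /= big_seq1 addr0. Qed.

Lemma rs_cons f u us c : rs f (u :: us) c = rs f us (c + u) + rs f us (c - u).
Proof.
rewrite /rs /= big_cat !big_map /=; congr (_ + _); apply: eq_bigr => t _;
  by rewrite addrA.
Qed.

Lemma size_signs n : size (signs n) = (2 ^ n)%N.
Proof. by elim: n => //= n IH; rewrite size_cat !size_map IH expnS mul2n addnn. Qed.

Lemma sumsq_cons u us : sumsq (u :: us) = u ^+ 2 + sumsq us.
Proof. by rewrite /sumsq big_cons. Qed.

Lemma sumsq_ge0 us : 0 <= sumsq us.
Proof. by rewrite /sumsq; apply: sumr_ge0 => i _; apply: sqr_ge0. Qed.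

Lemma rs_sq (us : seq R) (c : R) : rs (fun x => x ^+ 2) us c = 2 ^+ size us * (c ^+ 2 + sumsq us).
Proof.
elim: us c => [|u us IH] c; first by rewrite rs_nil /sumsq big_nil addr0 expr0 mul1r.
rewrite rs_cons !IH sumsq_cons /= (exprS 2 (size us)); ring.
Qed.

Lemma rs_le f g us c : (forall x, f x <= g x) -> rs f us c <= rs g us c.
Proof. by move=> h; apply: ler_sum => t _; apply: h. Qed.

Lemma mgf s us c : 0 < s -> 8 * s * sumsq us < 1 ->
  rs (fun x => expR (s * x ^+ 2)) us c <=
  2 ^+ size us * expR (sumsq us * (s / (1 - 8 * s * sumsq us)))
               * expR (s / (1 - 8 * s * sumsq us) * c ^+ 2).
Proof.
move=> s0; elim: us c => [|u us IH] c.
  by rewrite rs_nil /sumsq big_nil !mulr0 subr0 mul0r expR0 divr1 expr0 !mul1r.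
rewrite sumsq_cons => hv.
have hv' : 8 * s * sumsq us < 1.
  have := sqr_ge0 u; have := sumsq_ge0 us; nra.
set v' := sumsq us in hv hv' *.
set w := u ^+ 2 in hv *.
have w0 : 0 <= w by apply: sqr_ge0.
have v0 : 0 <= v' by apply: sumsq_ge0.
set a := 1 - 8 * s * v'.
set b := 1 - 8 * s * (w + v').
have a0 : 0 < a by rewrite /a; lra.
have b0 : 0 < b by rewrite /b; lra.
set be' := s / a. set be := s / b.
have be'0 : 0 <= be' by rewrite /be' divr_ge0 //; lra.
have hbb : be' <= be by rewrite /be' /be ler_pM2l // lef_pV2 ?posrE //; rewrite /a /b; nra.
have hbb2 : be' + 8 * be' ^+ 2 * w <= be.
  rewrite -subr_ge0.
  have -> : be - (be' + 8 * be' ^+ 2 * w) = 64 * s^+3 * w^+2 / (a ^+ 2 * b) :> R.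
    have an : a != 0 by rewrite lt0r_neq0.
    have bn : b != 0 by rewrite lt0r_neq0.
    have hb : b = a - 8 * s * w by rewrite /b /a; ring.
    rewrite /be /be' hb. field. rewrite -hb. by apply/andP.
  apply: divr_ge0; last by apply: mulr_ge0 => //; [apply: sqr_ge0 | lra].
  by apply: mulr_ge0; [apply: mulr_ge0 => //; apply: exprn_ge0; lra | apply: sqr_ge0].
rewrite rs_cons [size (_ :: _)]/=.
pose N := (2 : R) ^+ size us.
have N0 : 0 <= N by rewrite /N exprn_ge0.
have h1 : rs (fun x => expR (s * x ^+ 2)) us (c + u) <= N * expR (v' * be') * expR (be' * (c + u) ^+ 2) := IH _ hv'.
have h2 : rs (fun x => expR (s * x ^+ 2)) us (c - u) <= N * expR (v' * be') * expR (be' * (c - u) ^+ 2) := IH _ hv'.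
set y := 2 * be' * c * u.
have e1 : expR (be' * (c + u) ^+ 2) = expR (be' * (c ^+ 2 + w)) * expR y.
  by rewrite -expRD /y /w; congr expR; ring.
have e2 : expR (be' * (c - u) ^+ 2) = expR (be' * (c ^+ 2 + w)) * expR (- y).
  by rewrite -expRD /y /w; congr expR; ring.
have hc := cosh_le y.
have hE : 0 <= N * expR (v' * be') * expR (be' * (c ^+ 2 + w)).
  by apply: mulr_ge0; [apply: mulr_ge0 => //; apply: expR_ge0 | apply: expR_ge0].
apply: (le_trans (lerD h1 h2)).
rewrite e1 e2.
have -> : N * expR (v' * be') * (expR (be' * (c ^+ 2 + w)) * expR y) +
    N * expR (v' * be') * (expR (be' * (c ^+ 2 + w)) * expR (- y)) =
    (N * expR (v' * be') * expR (be' * (c ^+ 2 + w))) * (expR y + expR (- y)) by ring.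
apply: (le_trans (ler_wpM2l hE hc)).
have -> : N * expR (v' * be') * expR (be' * (c ^+ 2 + w)) * (2 * expR (2 * y ^+ 2))
   = 2 * N * expR (v' * be' + be' * (c ^+ 2 + w) + 2 * y ^+ 2) by rewrite !expRD; ring.
have -> : 2 ^+ (size us).+1 * expR ((w + v') * be) * expR (be * c ^+ 2) =
  2 * N * expR ((w + v') * be + be * c ^+ 2) by rewrite expRD /N (exprS 2 (size us)); ring.
apply: ler_wpM2l; first by apply: mulr_ge0 => //; lra.
rewrite ler_expR.
have hy : 2 * y ^+ 2 = 8 * be' ^+ 2 * w * c ^+ 2 by rewrite /y /w; ring.
rewrite hy.
have c0 := sqr_ge0 c.
have : (be' + 8 * be' ^+ 2 * w) * c ^+ 2 <= be * c ^+ 2 by apply: ler_wpM2r.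
have : (w + v') * be' <= (w + v') * be by apply: ler_wpM2l => //; lra.
lra.
Qed.
End S2.

Fixpoint mats (k n : nat) : seq (seq (seq bool)) :=
  if k is k'.+1 then [seq r :: M | r <- signs n, M <- mats k' n] else [:: [::]].

Lemma size_mats k n : size (mats k n) = ((2 ^ n) ^ k)%N.
Proof. by elim: k => //= k IH; rewrite size_allpairs size_signs IH expnS. Qed.

Lemma mats_size k n M : M \in mats k n -> size M = k.
Proof.
elim: k M => [|k IH] M /=; first by rewrite inE => /eqP ->.
by case/allpairsP => -[r M'] /= [_ hM ->] /=; rewrite (IH _ hM).
Qed.

Section S4.
Variable R : realType.

Definition Ysum (M : seq (seq bool)) (us : seq R) : R := \sum_(r <- M) dotl r us ^+ 2.

Lemma sum1 (T : Type) (s : seq T) : \sum_(x <- s) (1 : R) = (size s)%:R.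
Proof. by elim: s => [|x s IH]; rewrite ?big_nil // big_cons IH /= -add1n natrD. Qed.

Lemma mats_exp (s : R) k n us :
  \sum_(M <- mats k n) expR (s * Ysum M us) =
  (\sum_(r <- signs n) expR (s * dotl r us ^+ 2)) ^+ k.
Proof.
elim: k => [|k IH] /=; first by rewrite big_seq1 /Ysum big_nil mulr0 expR0 expr0.
rewrite big_allpairs_dep /= exprS -IH mulr_suml; apply: eq_bigr => r _.
rewrite mulr_sumr; apply: eq_bigr => M _.
by rewrite /Ysum big_cons mulrDr expRD.
Qed.

Lemma powbound (P A b : R) k : 0 <= P -> 0 <= A -> P <= A * expR b ->
  P ^+ k <= A ^+ k * expR (k%:R * b).
Proof.
move=> P0 A0 h; rewrite expRM_natl -exprMn.
by apply: lerXn2r => //; rewrite nnegrE // mulr_ge0 // expR_ge0.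
Qed.

Lemma rs0 (f : R -> R) n us : size us = n ->
  rs f us 0 = \sum_(r <- signs n) f (dotl r us).
Proof. by move=> <-; rewrite /rs; apply: eq_bigr => r _; rewrite add0r. Qed.

Lemma tail k n (us : seq R) e : size us = n -> sumsq us = 1 -> 0 < e -> e <= 1/4 ->
  \sum_(M <- mats k n)
     (if (k%:R * (1 - e) <= Ysum M us) && (Ysum M us <= k%:R * (1 + e)) then 0 else 1)
   <= 2 * ((2:R) ^+ n) ^+ k * expR (- (k%:R * e ^+ 2 / 8192)).
Proof.
move=> hn h1 e0 e1.
set K := (k%:R : R).
have K0 : 0 <= K by rewrite /K ler0n.
set s1 := e / 32. set s2 := e / 4096.
have s10 : 0 < s1 by rewrite /s1; lra.
have s20 : 0 < s2 by rewrite /s2; lra.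
set N := (2:R) ^+ n.
have N0 : 0 <= N by rewrite /N exprn_ge0.
have hb : forall M, (if (K * (1 - e) <= Ysum M us) && (Ysum M us <= K * (1 + e)) then 0 else 1)
   <= expR (- (s1 * K * (1 + e))) * expR (s1 * Ysum M us) + expR (s2 * K * (1 - e)) * expR (- s2 * Ysum M us).
  move=> M; set Y := Ysum M us.
  have g1 := expR_ge0 (- (s1 * K * (1 + e))); have g2 := expR_ge0 (s1 * Y).
  have g3 := expR_ge0 (s2 * K * (1 - e)); have g4 := expR_ge0 (- s2 * Y).
  case: ifP => hY; first by apply: addr_ge0; apply: mulr_ge0.
  rewrite -!expRD.
  have t1 := expR_ge1Dx (- (s1 * K * (1 + e)) + s1 * Y).
  have t2 := expR_ge1Dx (s2 * K * (1 - e) + - s2 * Y).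
  have g5 := expR_ge0 (- (s1 * K * (1 + e)) + s1 * Y).
  have g6 := expR_ge0 (s2 * K * (1 - e) + - s2 * Y).
  case/nandP: hY; rewrite -ltNge => hY.
    have : 0 <= s2 * (K * (1 - e) - Y) by apply: mulr_ge0; lra.
    nra.
  have : 0 <= s1 * (Y - K * (1 + e)) by apply: mulr_ge0; lra.
  nra.
apply: (le_trans (ler_sum _ (fun M _ => hb M))).
rewrite big_split /= -!mulr_sumr !mats_exp.
set P1 := \sum_(r <- signs n) expR (s1 * dotl r us ^+ 2).
set P2 := \sum_(r <- signs n) expR (- s2 * dotl r us ^+ 2).
have P10 : 0 <= P1 by apply: sumr_ge0 => r _; apply: expR_ge0.
have P20 : 0 <= P2 by apply: sumr_ge0 => r _; apply: expR_ge0.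
have hP1 : P1 <= N * expR (s1 / (1 - 8 * s1)).
  have := @mgf R s1 us 0 s10; rewrite h1 mulr1 => /(_ ltac:(rewrite /s1; lra)).
  rewrite (rs0 _ hn) -/P1 hn expr0n /= mulr0 expR0 mulr1 mul1r //.
have hP2 : P2 <= N * expR (- s2 + 2048 * s2 ^+ 2).
  have hZ1 : \sum_(r <- signs n) dotl r us ^+ 2 = N.
    by have := rs_sq us 0; rewrite (rs0 _ hn) h1 hn expr0n /= add0r mulr1.
  have hZ2 : \sum_(r <- signs n) (dotl r us ^+ 2) ^+ 2 <= 2048 * N.
    pose q : R := 1/16.
    apply: (@le_trans _ _ (\sum_(r <- signs n) 1024 * expR (q * dotl r us ^+ 2))).
      apply: ler_sum => r _.
      have z0 := sqr_ge0 (dotl r us).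
      have := @expR_sq_ge R (q * dotl r us ^+ 2) ltac:(rewrite /q; nra).
      set z := dotl r us ^+ 2. move=> hz. 
      have : (q * z) ^+ 2 / 4 = z ^+ 2 / 1024 by rewrite /q; field.
      lra.
    rewrite -mulr_sumr.
    have hm := @mgf R q us 0 ltac:(rewrite /q; lra) ltac:(rewrite h1 /q; lra).
    rewrite (rs0 _ hn) hn in hm.
    have hE : 2 ^+ n * expR (sumsq us * (q / (1 - 8 * q * sumsq us))) *
        expR (q / (1 - 8 * q * sumsq us) * 0 ^+ 2) <= 2 * N.
      rewrite h1 expr0n /= mulr0 expR0 mulr1 mul1r -/N.
      have -> : q / (1 - 8 * q * 1) = 1 / 8 by rewrite /q; field.
      have := @expR_le_inv R (1/8) ltac:(lra).
      have -> : (1 - 1/8 : R)^-1 = 8/7 by field.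
      move=> h8. rewrite mulrC; apply: ler_wpM2r => //; lra.
    lra.
  apply: (@le_trans _ _ (\sum_(r <- signs n) (1 - s2 * dotl r us ^+ 2 + (s2 * dotl r us ^+ 2) ^+ 2))).
    apply: ler_sum => r _; rewrite mulNr; apply: expRN_le.
    by apply: mulr_ge0; [lra | apply: sqr_ge0].
  rewrite big_split big_split /= sumrN sum1 size_signs natrX -/N -mulr_sumr hZ1.
  under eq_bigr do rewrite exprMn.
  rewrite -mulr_sumr.
  have : s2 ^+ 2 * \sum_(r <- signs n) (dotl r us ^+ 2) ^+ 2 <= s2 ^+ 2 * (2048 * N).
    by apply: ler_wpM2l => //; apply: sqr_ge0.
  have := expR_ge1Dx (- s2 + 2048 * s2 ^+ 2).
  have : 0 <= N by [].
  nra.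
have q1 := powbound k P10 N0 hP1.
have q2 := powbound k P20 N0 hP2.
have Nk0 : 0 <= N ^+ k by apply: exprn_ge0.
have hbeta : s1 / (1 - 8 * s1) <= s1 * (1 + e / 2).
  rewrite ler_pdivrMr; last by rewrite /s1; lra.
  rewrite /s1; nra.
have r1 : expR (- (s1 * K * (1 + e))) * P1 ^+ k <= N ^+ k * expR (- (K * e ^+ 2 / 8192)).
  apply: (le_trans (ler_wpM2l (expR_ge0 _) q1)).
  rewrite mulrCA -expRD; apply: ler_wpM2l => //; rewrite ler_expR.
  have : K * (s1 / (1 - 8 * s1)) <= K * (s1 * (1 + e / 2)) by apply: ler_wpM2l.
  have : 0 <= K * e ^+ 2 by apply: mulr_ge0 => //; apply: sqr_ge0.
  rewrite /s1; nra.
have r2 : expR (s2 * K * (1 - e)) * P2 ^+ k <= N ^+ k * expR (- (K * e ^+ 2 / 8192)).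
  apply: (le_trans (ler_wpM2l (expR_ge0 _) q2)).
  rewrite mulrCA -expRD; apply: ler_wpM2l => //; rewrite ler_expR.
  rewrite /s2; rewrite le_eqVlt; apply/orP; left; apply/eqP; rewrite -/K; field.
  by [].
apply: (le_trans (lerD r1 r2)).
have -> : 2 * N ^+ k * expR (- (K * e ^+ 2 / 8192)) =
  N ^+ k * expR (- (K * e ^+ 2 / 8192)) + N ^+ k * expR (- (K * e ^+ 2 / 8192)) by ring.
by [].
Qed.

End S4.

Section S5.
Variable R : realType.

Definition vl n (x : 'rV[R]_n) : seq R := [seq x ord0 j | j <- enum 'I_n].
Definition ns n (x : 'rV[R]_n) : R := \sum_(j < n) (x ord0 j) ^+ 2.

Lemma size_vl n (x : 'rV[R]_n) : size (vl x) = n.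
Proof. by rewrite size_map size_enum_ord. Qed.

Lemma sumsq_vl n (x : 'rV[R]_n) : sumsq (vl x) = ns x.
Proof. by rewrite /sumsq /ns big_map big_enum. Qed.

Lemma ns_ge0 n (x : 'rV[R]_n) : 0 <= ns x.
Proof. by apply: sumr_ge0 => i _; apply: sqr_ge0. Qed.

Lemma enormE n (x : 'rV[R]_n) : enorm x = Num.sqrt (ns x).
Proof. by []. Qed.

Lemma dotl_sub (J : Type) t (s : seq J) (f g : J -> R) :
  dotl t [seq f j - g j | j <- s] = dotl t (map f s) - dotl t (map g s).
Proof.
elim: s t => [|j s IH] [|b t] //=; rewrite ?subrr // IH; case: b; ring.
Qed.

Lemma dotl_scale t (s : seq R) (r : R) :
  dotl t [seq a * r | a <- s] = dotl t s * r.
Proof.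
elim: s t => [|a s IH] [|b t] //=; rewrite ?mul0r // IH; case: b; ring.
Qed.

Lemma vl_sub t n (x y : 'rV[R]_n) : dotl t (vl (x - y)) = dotl t (vl x) - dotl t (vl y).
Proof.
rewrite /vl -dotl_sub; congr dotl; apply: eq_map => j; by rewrite !mxE.
Qed.

Lemma ns_add_le n (a b : 'rV[R]_n) (t : R) : 0 < t ->
  ns (a + b) <= (1 + t) * ns a + (1 + t^-1) * ns b.
Proof.
move=> t0; rewrite /ns !mulr_sumr -big_split /=; apply: ler_sum => i _.
rewrite !mxE -subr_ge0.
have -> : (1 + t) * a ord0 i ^+ 2 + (1 + t^-1) * b ord0 i ^+ 2 - (a ord0 i + b ord0 i) ^+ 2
   = (t * a ord0 i - b ord0 i) ^+ 2 / t by field; rewrite lt0r_neq0.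
by apply: divr_ge0; [apply: sqr_ge0 | apply: ltW].
Qed.

Lemma ns_add_ge n (a b : 'rV[R]_n) (t : R) : 0 < t ->
  (1 - t) * ns a + (1 - t^-1) * ns b <= ns (a + b).
Proof.
move=> t0; rewrite /ns !mulr_sumr -big_split /=; apply: ler_sum => i _.
rewrite !mxE -subr_ge0.
have -> : (a ord0 i + b ord0 i) ^+ 2 - ((1 - t) * a ord0 i ^+ 2 + (1 - t^-1) * b ord0 i ^+ 2)
   = (t * a ord0 i + b ord0 i) ^+ 2 / t by field; rewrite lt0r_neq0.
by apply: divr_ge0; [apply: sqr_ge0 | apply: ltW].
Qed.

Lemma ns_le_entry n (a : 'rV[R]_n) j : (a ord0 j) ^+ 2 <= ns a.
Proof.
rewrite /ns (bigD1 j) //= lerDl; apply: sumr_ge0 => i _; apply: sqr_ge0.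
Qed.

Lemma ns_bound n (a : 'rV[R]_n) (c : R) : (forall i, (a ord0 i) ^+ 2 <= c) -> ns a <= n%:R * c.
Proof.
move=> h; apply: (@le_trans _ _ (\sum_(i < n) c)); first by apply: ler_sum => i _.
by rewrite sumr_const card_ord mulr_natl.
Qed.

Lemma ns0 n : ns (0 : 'rV[R]_n) = 0.
Proof. by rewrite /ns big1 // => i _; rewrite mxE expr0n. Qed.

Lemma lattice_dist n (s : R) (x y : 'rV[R]_n) : 0 <= s ->
  in_scaled_lattice s x -> in_scaled_lattice s y -> x != y -> s ^+ 2 <= ns (x - y).
Proof.
move=> s0 hx hy nxy.
have [j hj] : exists j, x ord0 j != y ord0 j.
  apply/existsP; apply: contraR nxy => /existsPn h; apply/eqP/rowP => j.
  by have := h j; rewrite negbK => /eqP.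
apply: le_trans (ns_le_entry _ j); rewrite !mxE.
have [z1 e1] := hx j; have [z2 e2] := hy j.
rewrite e1 e2 in hj *.
have hz : z1 != z2 by apply: contraNneq hj => ->.
have h1 : 1 <= (z1 - z2) ^+ 2 :> int.
  have : (z1 - z2 != 0) by rewrite subr_eq0.
  move: (z1 - z2) => z; lia.
have h2 : (1 : R) <= ((z1 - z2) ^+ 2)%:~R by rewrite ler1z.
rewrite -mulrBr exprMn rmorphXn /= rmorphB /= in h2 *.
by rewrite -[X in X <= _]mulr1; apply: ler_wpM2l => //; apply: sqr_ge0.
Qed.

Definition gv k n (M : seq (seq bool)) (x : 'rV[R]_n) : 'rV[R]_k :=
  \row_(i < k) (dotl (nth [::] M i) (vl x) / Num.sqrt k%:R).

Definition Fv k n (l0 : R) (M : seq (seq bool)) (x : 'rV[R]_n) : 'rV[R]_k :=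
  \row_(i < k) ((Num.floor (l0 * gv k M x ord0 i))%:~R / l0).

Lemma Ysum_nth k (M : seq (seq bool)) (w : seq R) : size M = k ->
  Ysum M w = \sum_(i < k) dotl (nth [::] M i) w ^+ 2.
Proof. by move=> <-; rewrite /Ysum (big_nth [::]) big_mkord. Qed.

Lemma ns_gv k n M (x y : 'rV[R]_n) : size M = k ->
  ns (gv k M x - gv k M y) = Ysum M (vl (x - y)) / k%:R.
Proof.
move=> hM; rewrite (Ysum_nth _ hM) /ns mulr_suml; apply: eq_bigr => i _.
rewrite !mxE vl_sub -mulrBl exprMn exprVn sqr_sqrtr //; exact: ler0n.
Qed.

Lemma Ysum_scale (M : seq (seq bool)) (w : seq R) (r : R) :
  Ysum M [seq a * r | a <- w] = Ysum M w * r ^+ 2.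
Proof. by rewrite /Ysum mulr_suml; apply: eq_bigr => t _; rewrite dotl_scale exprMn. Qed.

Lemma sumsq_scale (w : seq R) (r : R) : sumsq [seq a * r | a <- w] = sumsq w * r ^+ 2.
Proof. by rewrite /sumsq big_map mulr_suml; apply: eq_bigr => a _; rewrite exprMn. Qed.

Definition uvec n (x y : 'rV[R]_n) : seq R :=
  [seq a * (Num.sqrt (ns (x - y)))^-1 | a <- vl (x - y)].

Lemma sumsq_uvec n (x y : 'rV[R]_n) : 0 < ns (x - y) -> sumsq (uvec x y) = 1.
Proof.
move=> h; rewrite /uvec sumsq_scale sumsq_vl exprVn sqr_sqrtr ?ltW // mulfV //.
by rewrite lt0r_neq0.
Qed.

Lemma size_uvec n (x y : 'rV[R]_n) : size (uvec x y) = n.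
Proof. by rewrite size_map size_vl. Qed.

Lemma gv_good k n M (x y : 'rV[R]_n) (e : R) : size M = k -> (0 < k)%N ->
  0 < ns (x - y) ->
  (k%:R * (1 - e) <= Ysum M (uvec x y)) && (Ysum M (uvec x y) <= k%:R * (1 + e)) ->
  (1 - e) * ns (x - y) <= ns (gv k M x - gv k M y) <= (1 + e) * ns (x - y).
Proof.
move=> hM k0 S0 /andP [h1 h2].
rewrite (ns_gv _ _ hM).
move: h1 h2; rewrite /uvec Ysum_scale exprVn sqr_sqrtr; last exact: ltW.
set S := ns (x - y). set Y := Ysum M (vl (x - y)).
have K0 : (0 : R) < k%:R by rewrite ltr0n.
have eY : Y = (Y * S^-1) * S by rewrite -mulrA mulVf ?mulr1 // lt0r_neq0.
move=> h1 h2.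
rewrite eY; set Yu := Y * S^-1 in h1 h2 *.
have S1 : 0 <= S by apply: ltW.
apply/andP; split.
  rewrite ler_pdivlMr //.
  have : 0 <= (Yu - k%:R * (1 - e)) * S by apply: mulr_ge0 => //; rewrite subr_ge0.
  nra.
rewrite ler_pdivrMr //.
have : 0 <= (k%:R * (1 + e) - Yu) * S by apply: mulr_ge0 => //; rewrite subr_ge0.
nra.
Qed.

Lemma Fv_err k n l0 M (x : 'rV[R]_n) i : 0 < l0 ->
  - l0^-1 < Fv k l0 M x ord0 i - gv k M x ord0 i <= 0.
Proof.
move=> l00; rewrite !mxE.
set z := l0 * _.
have h1 := floor_le z. have h2 := floorD1_gt z.
rewrite rmorphD /= in h2.
set f := (Num.floor z)%:~R in h1 h2 *.
have -> : dotl (nth [::] M i) (vl x) / Num.sqrt k%:R = z / l0.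
  by rewrite /z [RHS]mulrC mulrA mulVf ?mul1r // lt0r_neq0.
apply/andP; split.
  rewrite -mulrBl (_ : - l0^-1 = -1 * l0^-1); last by ring.
  rewrite ltr_pM2r ?invr_gt0 //; lra.
rewrite subr_le0 ler_pM2r ?invr_gt0 //.
Qed.

Lemma sum_le_size (T : Type) (s : seq T) (F : T -> R) c :
  (forall x, F x <= c) -> \sum_(x <- s) F x <= (size s)%:R * c.
Proof.
move=> h; elim: s => [|a s IH]; first by rewrite big_nil mul0r.
by rewrite big_cons /= -add1n natrD mulrDl mul1r; apply: lerD.
Qed.

Lemma exists_small (T : eqType) (s : seq T) (F : T -> R) :
  \sum_(x <- s) F x < (size s)%:R -> exists x, x \in s /\ F x < 1.
Proof.
elim: s => [|a s IH]; first by rewrite big_nil ltxx.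
rewrite big_cons /= -add1n natrD => h.
case: (ltrP (F a) 1) => ha; first by exists a; rewrite mem_head.
have [x [hx hF]] : exists x, x \in s /\ F x < 1 by apply: IH; lra.
by exists x; rewrite in_cons hx orbT.
Qed.

Lemma le_sum_mem (T : eqType) (s : seq T) (F : T -> R) x :
  (forall z, 0 <= F z) -> x \in s -> F x <= \sum_(z <- s) F z.
Proof.
move=> h0; elim: s => [|a s IH] //; rewrite in_cons big_cons => /orP [/eqP ->|hx].
  by rewrite lerDl sumr_ge0.
by apply: (le_trans (IH hx)); rewrite lerDr.
Qed.

Lemma ns_pos n (x y : 'rV[R]_n) : x != y -> 0 < ns (x - y).
Proof.
move=> nxy.
have [j hj] : exists j, x ord0 j != y ord0 j.
  apply/existsP; apply: contraR nxy => /existsPn h; apply/eqP/rowP => j.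
  by have := h j; rewrite negbK => /eqP.
apply: lt_le_trans (ns_le_entry _ j); rewrite !mxE.
by rewrite lt0r sqr_ge0 andbT sqrf_eq0 subr_eq0.
Qed.

Definition goodb k (e : R) M (w : seq R) :=
  (k%:R * (1 - e) <= Ysum M w) && (Ysum M w <= k%:R * (1 + e)).

Lemma exists_M k d (e : R) (D : seq 'rV[R]_d) : size D = d -> 0 < e -> e <= 1/4 ->
  2 * d%:R ^+ 2 * expR (- (k%:R * e ^+ 2 / 8192)) < 1 ->
  exists M, size M = k /\ forall x y, x \in D -> y \in D -> x != y -> goodb k e M (uvec x y).
Proof.
move=> hD e0 e1 hsmall.
pose bad (M : seq (seq bool)) (x y : 'rV[R]_d) : R := if x == y then 0 else (if goodb k e M (uvec x y) then 0 else 1).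
have bad0 : forall M x y, 0 <= bad M x y.
  by move=> M x y; rewrite /bad; case: (x == y) => //; case: goodb.
set T := 2 * ((2:R) ^+ d) ^+ k * expR (- (k%:R * e ^+ 2 / 8192)).
have hT : forall x y, \sum_(M <- mats k d) bad M x y <= T.
  move=> x y; rewrite /bad; case: eqP => hxy.
    rewrite big1 // /T; apply: mulr_ge0; last exact: expR_ge0.
    by apply: mulr_ge0 => //; apply: exprn_ge0; apply: exprn_ge0.
  apply: tail => //; [exact: size_uvec | apply: sumsq_uvec; apply: ns_pos; exact/eqP].
have hsum : \sum_(M <- mats k d) \sum_(x <- D) \sum_(y <- D) bad M x y < (size (mats k d))%:R.
  rewrite exchange_big /=.
  under eq_bigr do rewrite exchange_big /=.
  apply: (le_lt_trans (sum_le_size _ (c := (size D)%:R * T) _)).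
    by move=> x; apply: sum_le_size => y; apply: hT.
  rewrite hD size_mats !natrX /T.
  set P := ((2:R) ^+ d) ^+ k.
  have P0 : 0 < P by rewrite /P !exprn_gt0.
  have -> : d%:R * (d%:R * (2 * P * expR (- (k%:R * e ^+ 2 / 8192)))) =
    (2 * d%:R ^+ 2 * expR (- (k%:R * e ^+ 2 / 8192))) * P by ring.
  by rewrite -[X in _ < X]mul1r ltr_pM2r.
have [M [hM hb]] := exists_small hsum.
exists M; split; first exact: mats_size hM.
move=> x y hx hy nxy.
have : bad M x y < 1.
  apply: le_lt_trans hb.
  have h1 := @le_sum_mem _ D (fun y => bad M x y) y (bad0 M x) hy.
  have h2 : \sum_(y <- D) bad M x y <= \sum_(x <- D) \sum_(y <- D) bad M x y.
    apply: (@le_sum_mem _ D (fun x => \sum_(y <- D) bad M x y) x _ hx).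
    by move=> z; apply: sumr_ge0 => w _; apply: bad0.
  exact: le_trans h1 h2.
by rewrite /bad (negbTE nxy); case: goodb => //; rewrite ltxx.
Qed.

End S5.

Section S6.
Variable R : realType.

Lemma real_bounds (e S G2 E2 K L l : R) : 0 < e -> e <= 1/4 ->
  (1 - e) * S <= G2 -> G2 <= (1 + e) * S -> 0 <= E2 -> E2 <= K / L ^+ 2 ->
  (l / L) ^+ 2 <= S -> 4 * K / e ^+ 2 < l -> 1 <= l -> 0 <= K -> 0 < L ->
  (1 + e) * G2 + (1 + e^-1) * E2 <= (1 + 2 * e) ^+ 2 * S /\
  (1 - 2 * e) ^+ 2 * S <= (1 - e) * G2 + (1 - e^-1) * E2.
Proof.
move=> e0 e1 hG1 hG2 E0 hE hS hl l1 K0 L0.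
have S0 : 0 <= S by apply: le_trans hS; apply: sqr_ge0.
have hK : K <= e ^+ 2 / 4 * l.
  have e2 : 0 < e ^+ 2 by apply: exprn_gt0.
  move: hl; rewrite ltr_pdivrMr // => hl; nra.
have hE2 : E2 <= e ^+ 2 / 4 * S.
  apply: (le_trans hE).
  set iL := L^-1.
  have iL0 : 0 < iL by rewrite invr_gt0.
  have -> : K / L ^+ 2 = K * iL ^+ 2 by rewrite /iL exprVn.
  rewrite (_ : (l / L) ^+ 2 = l ^+ 2 * iL ^+ 2) in hS; last by rewrite exprMn.
  have iL2 : 0 < iL ^+ 2 by apply: exprn_gt0.
  have : K * iL ^+ 2 <= e ^+ 2 / 4 * l * iL ^+ 2 by apply: ler_wpM2r => //; apply: ltW.
  have : e ^+ 2 / 4 * l * iL ^+ 2 <= e ^+ 2 / 4 * (l ^+ 2 * iL ^+ 2).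
    rewrite mulrA; apply: ler_wpM2r; first exact: ltW.
    apply: ler_wpM2l; first by apply: divr_ge0 => //; apply: sqr_ge0.
    nra.
  have : e ^+ 2 / 4 * (l ^+ 2 * iL ^+ 2) <= e ^+ 2 / 4 * S.
    by apply: ler_wpM2l => //; apply: divr_ge0 => //; apply: sqr_ge0.
  lra.
set ie := e^-1.
have hie : e * ie = 1 by rewrite /ie mulfV // lt0r_neq0.
have ie0 : 0 < ie by rewrite /ie invr_gt0.
have hie2 : ie * E2 <= e / 4 * S.
  have : ie * E2 <= ie * (e ^+ 2 / 4 * S) by apply: ler_wpM2l => //; apply: ltW.
  have -> : ie * (e ^+ 2 / 4 * S) = (e * ie) * (e / 4 * S) by ring.
  by rewrite hie mul1r.
split.
  have : (1 + e) * G2 <= (1 + e) * ((1 + e) * S) by apply: ler_wpM2l => //; lra.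
  nra.
have : (1 - e) * ((1 - e) * S) <= (1 - e) * G2 by apply: ler_wpM2l => //; lra.
nra.
Qed.

End S6.

Unset Implicit Arguments.

Theorem mainTheorem1 (R : realType) (eps : R) (heps0 : 0 < eps) :
  exists c : R, 0 < c /\
  forall (d lambda0 N0 : nat), (0 < d)%N -> (0 < lambda0)%N ->
    eps < 1 / (lambda0%:R + 1) ->
  forall k : nat, (0 < k)%N -> c * ln (d%:R : R) <= k%:R ->
  exists lambda1 : nat,
  forall lambda : nat, (lambda1 <= lambda)%N ->
  forall D : seq 'rV[R]_d,
    uniq D -> size D = d ->
    (forall x, x \in D ->
       in_scaled_lattice (lambda%:R / lambda0%:R) x /\
       in_ball (lambda%:R * N0%:R) x) ->
  exists F : 'rV[R]_d -> 'rV[R]_k,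
    (forall x, x \in D -> in_scaled_lattice (1 / lambda0%:R) (F x)) /\
    (forall x y, x \in D -> y \in D ->
       (1 - eps - eps / (lambda%:R * lambda0%:R)) * enorm (x - y)
         <= enorm (F x - F y) /\
       enorm (F x - F y)
         <= (1 + eps + eps / (lambda%:R * lambda0%:R)) * enorm (x - y)).
Proof.
set e := eps / 2.
have e0 : 0 < e by rewrite /e; lra.
exists (4 * 8192 / e ^+ 2); split.
  by apply: divr_gt0; [lra | apply: exprn_gt0].
move=> d l0 N0 hd hl0 heps k hk hc.
have L1 : (1 : R) <= l0%:R by rewrite ler1n.
have eps2 : eps < 1/2.
  apply: (lt_le_trans heps).
  rewrite ler_pdivrMr; last by lra.
  rewrite mulrDr mulr1; lra.
have e1 : e <= 1/4 by rewrite /e; lra.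
exists (Num.truncn (4 * k%:R / e ^+ 2)).+1.
move=> l hl D huniq hD hDl.
have hl' : 4 * k%:R / e ^+ 2 < l%:R.
  apply: (lt_le_trans (truncnS_gt _)); by rewrite ler_nat.
have l1 : (1 : R) <= l%:R by rewrite ler1n; apply: leq_trans hl.
have K1 : (1 : R) <= k%:R by rewrite ler1n.
have L0 : (0 : R) < l0%:R by lra.
have [M [hM hgood]] : exists M, size M = k /\
    forall x y, x \in D -> y \in D -> x != y -> goodb k e M (uvec x y).
  case: (ltnP 1 d) => hd1.
    apply: exists_M => //.
    have d2 : (2 : R) <= d%:R by rewrite ler_nat.
    have dp : (0 : R) < d%:R by lra.
    have hx : 4 * ln (d%:R : R) <= k%:R * e ^+ 2 / 8192.
      have e2 : 0 < e ^+ 2 by apply: exprn_gt0.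
      have := ler_wpM2r (x := e ^+ 2 / 8192) ltac:(apply: divr_ge0; [exact: ltW | lra]) hc.
      have -> : 4 * 8192 / e ^+ 2 * ln (d%:R : R) * (e ^+ 2 / 8192) = 4 * ln (d%:R : R).
        by field; rewrite lt0r_neq0.
      by rewrite mulrA.
    have hE : expR (- (k%:R * e ^+ 2 / 8192)) <= ((d%:R : R) ^+ 4)^-1.
      have -> : ((d%:R : R) ^+ 4)^-1 = expR (- (4%:R * ln (d%:R : R))).
        by rewrite expRN expRM_natl lnK // posrE.
      by rewrite ler_expR lerN2.
    have d4 : (0 : R) < d%:R ^+ 4 by apply: exprn_gt0.
    have P0 : (0 : R) < 2 * d%:R ^+ 2 by apply: mulr_gt0 => //; apply: exprn_gt0.
    apply: (le_lt_trans (ler_wpM2l (ltW P0) hE)).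
    have -> : 2 * d%:R ^+ 2 * ((d%:R : R) ^+ 4)^-1 = 2 / d%:R ^+ 2.
      by field; rewrite lt0r_neq0.
    rewrite ltr_pdivrMr; last by apply: exprn_gt0.
    nra.
  exists (nseq k [::]); split; first by rewrite size_nseq.
  have d1 : d = 1%N by apply/eqP; rewrite eqn_leq hd1 hd.
  have hD1 : size D = 1%N by rewrite hD d1.
  move=> x y; case: D huniq hDl hD hD1 => [|z [|z' D']] //= _ _ _ _.
  by rewrite !inE => /eqP -> /eqP ->; rewrite eqxx.
exists (Fv k (l0%:R) M); split.
  move=> x _ i; exists (Num.floor (l0%:R * gv k M x ord0 i)).
  by rewrite mxE div1r mulrC.
move=> x y hx hy.
case: (eqVneq x y) => [<-|nxy].
  rewrite !subrr !enormE !ns0 sqrtr0 !mulr0; split; exact: lexx.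
have [hlx _] := hDl x hx. have [hly _] := hDl y hy.
have s0 : (0 : R) <= l%:R / l0%:R by apply: divr_ge0; lra.
have hS := lattice_dist s0 hlx hly nxy.
have S0 := ns_pos nxy.
have hG := gv_good hM hk S0 (hgood x y hx hy nxy).
case/andP: hG => hG1 hG2.
set a := gv k M x - gv k M y.
set b := (Fv k l0%:R M x - gv k M x) - (Fv k l0%:R M y - gv k M y).
have hab : Fv k l0%:R M x - Fv k l0%:R M y = a + b.
  by apply/rowP => i; rewrite /a /b !mxE; ring.
have hb : ns b <= k%:R * (l0%:R ^+ 2)^-1.
  apply: ns_bound => i.
  have := @Fv_err R k d l0%:R M x i L0; have := @Fv_err R k d l0%:R M y i L0.
  move=> /andP [u1 u2] /andP [v1 v2].
  have -> : b ord0 i = (Fv k l0%:R M x ord0 i - gv k M x ord0 i) - (Fv k l0%:R M y ord0 i - gv k M y ord0 i) by rewrite /b !mxE.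
  set p := Fv k l0%:R M x ord0 i - gv k M x ord0 i in v1 v2 *.
  set q := Fv k l0%:R M y ord0 i - gv k M y ord0 i in u1 u2 *.
  rewrite -exprVn.
  have il : 0 < l0%:R^-1 :> R by rewrite invr_gt0.
  nra.
have [hup hlo] := real_bounds e0 e1 hG1 hG2 (ns_ge0 b) hb hS hl' l1 (ler0n _ _) L0.
have e2 : 0 < e^-1 by rewrite invr_gt0.
have U := ns_add_le a b e0. have Lo := ns_add_ge a b e0.
rewrite !enormE hab.
set S := ns (x - y).
have sS := sqrtr_ge0 S.
have hq : 0 <= eps / (l%:R * l0%:R) by apply: divr_ge0; [lra | apply: mulr_ge0; lra].
split.
  apply: (@le_trans _ _ ((1 - 2 * e) * Num.sqrt S)).
    by apply: ler_wpM2r => //; rewrite /e; lra.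
  have -> : (1 - 2 * e) * Num.sqrt S = Num.sqrt ((1 - 2 * e) ^+ 2 * S).
    by rewrite sqrtrM ?sqr_ge0 // sqrtr_sqr ger0_norm //; rewrite /e; lra.
  rewrite ler_sqrt; last exact: ns_ge0.
  exact: le_trans hlo Lo.
apply: (@le_trans _ _ ((1 + 2 * e) * Num.sqrt S)); last first.
  by apply: ler_wpM2r => //; rewrite /e; lra.
have -> : (1 + 2 * e) * Num.sqrt S = Num.sqrt ((1 + 2 * e) ^+ 2 * S).
  by rewrite sqrtrM ?sqr_ge0 // sqrtr_sqr ger0_norm //; lra.
rewrite ler_sqrt; last by apply: mulr_ge0; [apply: sqr_ge0 | exact: ns_ge0].
exact: le_trans U hup.
Qed.
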